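(* For every $R>0$ and every integer $\ell\ge1$, $\widehat W_R(\ell)\le\widehat W_R(1)$, where $\widehat W_R(\ell)=\frac{2}{\pi\ell^3}(\ell R-\sin(\ell R))$.
   Context: For $R\in[0,\pi]$, $\widehat W_R(\ell)$ is the $\ell$-th Fourier coefficient $\int_{\mathbb T}W_R(\theta)e^{-2\pi i\ell\theta}d\theta$ of the Hegselmann--Krause interaction $W_R(\theta)=(R-2\pi|\theta|)_+^2$ on $\mathbb T=[-\frac12,\frac12)$; the claim concerns the explicit formula given. *)

(* Defs.v *)
From Stdlib Require Export Reals.
Open Scope R_scope.

(* Explicit formula for the l-th Fourier coefficient of the
   Hegselmann--Krause interaction W_R(theta) = (R - 2 pi |theta|)_+^2:
   What R l = 2/(pi l^3) * (l R - sin(l R)). *)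
Definition What (r : R) (l : nat) : R :=
  2 / (PI * (INR l) ^ 3) * (INR l * r - sin (INR l * r)).

(* Main.v *)
Require Import Defs.
From Stdlib Require Import Reals Lra.
From Coquelicot Require Import Coquelicot.
Open Scope R_scope.

Lemma mono_dec (f df : R -> R) (a b : R) :
  a <= b -> (forall x, a <= x <= b -> is_derive f x (df x)) ->
  (forall x, a <= x <= b -> df x <= 0) -> f b <= f a.
Proof.
  intros Hab Hd Hn.
  destruct (MVT_gen f a b df) as [c [Hc Heq]].
  - intros x Hx. apply Hd. rewrite Rmin_left in Hx by lra.
    rewrite Rmax_right in Hx by lra. lra.
  - intros x Hx. rewrite Rmin_left in Hx by lra.
    rewrite Rmax_right in Hx by lra.
    apply derivable_continuous_pt. exists (df x).
    apply is_derive_Reals. apply Hd. lra.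
  - rewrite Rmin_left in Hc by lra. rewrite Rmax_right in Hc by lra.
    assert (df c <= 0) by (apply Hn; lra).
    assert (df c * (b - a) <= 0).
    { apply Rmult_le_0_r; lra. }
    lra.
Qed.

Lemma PI_gt3 : 3 < PI.
Proof. pose proof PI2_3_2. lra. Qed.

Lemma k_le0 x : 0 <= x <= PI -> x * cos x - sin x <= 0.
Proof.
  intros Hx.
  assert (H := mono_dec (fun t => t * cos t - sin t) (fun t => - (t * sin t)) 0 x
    ltac:(lra)).
  simpl in H. rewrite cos_0, sin_0 in H.
  enough (x * cos x - sin x <= 0 * 1 - 0) by lra.
  apply H.
  - intros t Ht. auto_derive; auto. ring.
  - intros t Ht. pose proof (sin_ge_0 t ltac:(lra) ltac:(lra)).
    assert (0 <= t * sin t) by (apply Rmult_le_pos; lra). lra.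
Qed.

Lemma hd_le0 x : 0 <= x <= PI -> -2 + 2 * cos x + x * sin x <= 0.
Proof.
  intros Hx.
  assert (H := mono_dec (fun t => -2 + 2 * cos t + t * sin t)
    (fun t => t * cos t - sin t) 0 x ltac:(lra)).
  simpl in H. rewrite cos_0, sin_0 in H.
  enough (-2 + 2 * cos x + x * sin x <= -2 + 2 * 1 + 0 * 0) by lra.
  apply H.
  - intros t Ht. auto_derive; auto. ring.
  - intros t Ht. apply k_le0. lra.
Qed.

Lemma h_le0 x : 0 <= x -> 3 * sin x - 2 * x - x * cos x <= 0.
Proof.
  intros Hx. pose proof PI_gt3 as HPI.
  destruct (Rle_lt_dec x PI) as [Hp|Hp].
  - assert (H := mono_dec (fun t => 3 * sin t - 2 * t - t * cos t)
      (fun t => -2 + 2 * cos t + t * sin t) 0 x ltac:(lra)).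
    simpl in H. rewrite cos_0, sin_0 in H.
    enough (3 * sin x - 2 * x - x * cos x <= 3 * 0 - 2 * 0 - 0 * 1) by lra.
    apply H.
    + intros t Ht. auto_derive; auto. ring.
    + intros t Ht. apply hd_le0. lra.
  - pose proof (SIN_bound x). pose proof (COS_bound x).
    assert (0 <= x * (1 + cos x)) by (apply Rmult_le_pos; lra). nra.
Qed.

Definition g (x : R) := (x - sin x) / x ^ 3.

Lemma g_dec a b : 0 < a <= b -> g b <= g a.
Proof.
  intros Hab. unfold g.
  apply (mono_dec (fun t => (t - sin t) / t ^ 3)
    (fun t => (3 * sin t - 2 * t - t * cos t) / t ^ 4) a b ltac:(lra)).
  - intros t Ht. auto_derive.
    + assert (t <> 0) by lra. repeat split; auto; intro HH; apply (pow_nonzero t 3 H); simpl; lra.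
    + assert (t <> 0) by lra. field. auto.
  - intros t Ht. unfold Rdiv. apply Rmult_le_0_r.
    + apply h_le0; lra.
    + left. apply Rinv_0_lt_compat. apply pow_lt. lra.
Qed.

Theorem lemma3p3 : forall (r : R) (l : nat),
  0 < r -> (1 <= l)%nat -> What r l <= What r 1.
Proof.
  intros r l Hr Hl.
  assert (HL : 1 <= INR l) by (apply (le_INR 1); auto).
  assert (Hg := g_dec r (INR l * r) ltac:(nra)).
  unfold g in Hg. unfold What.
  assert (HP := PI_RGT_0).
  assert (E1 : forall y, 0 < y -> 2 / (PI * y ^ 3) * (y * r - sin (y * r))
     = 2 * r ^ 3 / PI * ((y * r - sin (y * r)) / (y * r) ^ 3)).
  { intros y Hy. field. split; lra. }
  rewrite !E1 by (simpl; lra).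
  replace (INR 1 * r) with r by (simpl; ring).
  apply Rmult_le_compat_l; auto.
  unfold Rdiv. apply Rmult_le_pos. pose proof (pow_lt r 3 Hr). lra.
  left. apply Rinv_0_lt_compat. auto.
Qed.
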